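(* Let $n = M\times N\ge 2$ and let $m_1, m_2$ be positive integers. Let $\sigma_0,\sigma_1,\sigma_2$ be arbitrary permutations of $\{1,2,\ldots,n\}$ (these are the inverse pre-, mid- and post-permutations $f_{S0}^{-1}, f_{S1}^{-1}, f_{S2}^{-1}$ of a five-stage permutation–diffusion–permutation–diffusion–permutation cipher). For each plaintext position $k\in\{1,\ldots,n\}$ define the associated set of ciphertext positions $$A_k=\bigl\{\sigma_2\bigl(\sigma_1(\sigma_0(k)-i)-j\bigr)\;:\;0\le i\le m_1,\ 0\le j\le m_2,\ \sigma_0(k)-i\ge 1,\ \sigma_1(\sigma_0(k)-i)-j\ge 1\bigr\}.$$ Then the family $\{A_k\}_{k=1}^{n}$ contains a complete chain of length $n$: there is an ordering $k_1,k_2,\ldots,k_n$ of $\{1,\ldots,n\}$ (i.e. a bijection $t\mapsto k_t$) such that $A_{k_t}\cap A_{k_{t+1}}\neq\emptyset$ for every $t=1,\ldots,n-1$, and for every $t\le n-1$ every element of $A_{k_t}$ belongs to $A_{k_{t-1}}\cap A_{k_t}$ (when $t\ge 2$) or to $A_{k_t}\cap A_{k_{t+1}}$.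
   Context: This formalizes the paper's ''associated position expression'' for a five-stage plaintext non-delayed chaotic cipher: decryption is $P(k)=f_{D1}^{-1}(\ldots)$ in which plaintext pixel $P(k)$ depends exactly on the ciphertext pixels $C(p)$ with $p\in A_k$ (positions $\le 0$ correspond to fixed initial conditions and are not ciphertext pixels, hence are excluded). A chain is a sequence of sets (nodes) in which every two adjacent sets have nonempty intersection; the first node is the chain head and the last the chain tail. A complete chain of length $n$ is a chain that uses all $n$ sets, in which every element of every node other than the tail lies in the intersection of that node with an adjacent node. *)

(* Defs.v *)
From mathcomp Require Import all_boot all_fingroup.
Set Implicit Arguments. Unset Strict Implicit. Unset Printing Implicit Defensive.

(* Positions {1,...,n} are represented 0-based by 'I_n (position p <-> ordinal p-1). *)

(* Associated position set A_k.  x \in A_k iff there are positions a, b with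
   a = sigma0(k) - i, 0 <= i <= m1, b = sigma1(a) - j, 0 <= j <= m2, x = sigma2(b).
   Since a, b are ordinals, the conditions sigma0(k)-i >= 1 and
   sigma1(sigma0(k)-i)-j >= 1 are built in. *)
Definition assoc_set (n m1 m2 : nat) (s0 s1 s2 : {perm 'I_n}) (k : 'I_n) : {set 'I_n} :=
  [set x : 'I_n | [exists a : 'I_n, exists b : 'I_n,
     [&& (val a <= val (s0 k) <= val a + m1),
         (val b <= val (s1 a) <= val b + m2) & x == s2 b]]].

Definition is_chain (T : finType) (c : seq {set T}) : Prop :=
  forall t, t.+1 < size c -> nth set0 c t :&: nth set0 c t.+1 != set0.

Definition is_complete_chain (T : finType) (c : seq {set T}) : Prop :=
  is_chain c /\
  forall t, t.+1 < size c -> forall x, x \in nth set0 c t ->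
    (0 < t /\ x \in nth set0 c t.-1 :&: nth set0 c t)
    \/ x \in nth set0 c t :&: nth set0 c t.+1.

(* Main.v *)
Require Import Defs.
From mathcomp Require Import all_boot all_fingroup.
From mathcomp Require Import zify.
Set Implicit Arguments. Unset Strict Implicit.

Lemma memA n m1 m2 (s0 s1 s2 : {perm 'I_n}) (o : 'I_n) x :
  (x \in assoc_set m1 m2 s0 s1 s2 ((s0^-1)%g o)) =
  [exists a : 'I_n, exists b : 'I_n,
     [&& (val a <= val o <= val a + m1),
         (val b <= val (s1 a) <= val b + m2) & x == s2 b]].
Proof. by rewrite inE permKV. Qed.

Definition cseq n m1 m2 (s0 s1 s2 : {perm 'I_n}) :=
  [seq assoc_set m1 m2 s0 s1 s2 k | k <- [seq (s0^-1)%g i | i <- enum 'I_n]].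

Lemma cseq_size n m1 m2 (s0 s1 s2 : {perm 'I_n}) : size (cseq m1 m2 s0 s1 s2) = n.
Proof. by rewrite /cseq size_map size_map size_enum_ord. Qed.

Lemma cseq_nth n m1 m2 (s0 s1 s2 : {perm 'I_n}) t (ht : t < n) :
  nth set0 (cseq m1 m2 s0 s1 s2) t = assoc_set m1 m2 s0 s1 s2 ((s0^-1)%g (Ordinal ht)).
Proof.
have x0 : 'I_n := Ordinal ht.
rewrite /cseq (nth_map x0); last by rewrite size_map size_enum_ord.
rewrite (nth_map x0); last by rewrite size_enum_ord.
have -> : nth x0 (enum 'I_n) t = nth x0 (enum 'I_n) (Ordinal ht) by [].
by rewrite nth_ord_enum.
Qed.

Theorem theorem1 (M N n m1 m2 : nat) (s0 s1 s2 : {perm 'I_n}) :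
  n = M * N -> 2 <= n -> 0 < m1 -> 0 < m2 ->
  exists ks : seq 'I_n,
    perm_eq ks (enum 'I_n) /\
    is_complete_chain [seq assoc_set m1 m2 s0 s1 s2 k | k <- ks].
Proof.
move=> _ n2 m1p m2p.
have n0 : 0 < n by apply: leq_trans n2.
pose x0 : 'I_n := Ordinal n0.
exists [seq (s0^-1)%g i | i <- enum 'I_n]; split.
  apply: uniq_perm; first by rewrite map_inj_uniq ?enum_uniq //; apply: perm_inj.
    exact: enum_uniq.
  move=> y; rewrite mem_enum; apply/mapP; exists (s0 y); first by rewrite mem_enum.
  by rewrite permK.
change (is_complete_chain (cseq m1 m2 s0 s1 s2)).
have sz := cseq_size m1 m2 s0 s1 s2.
have Hn := cseq_nth m1 m2 s0 s1 s2.
split.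
  move=> t; rewrite sz => ht1; have ht : t < n by lia.
  rewrite (Hn t ht) (Hn t.+1 ht1); apply/set0Pn.
  exists (s2 (s1 (Ordinal ht))); rewrite inE !memA; apply/andP; split.
    apply/existsP; exists (Ordinal ht); apply/existsP; exists (s1 (Ordinal ht)).
    rewrite /= !leqnn eqxx /=; lia.
  apply/existsP; exists (Ordinal ht); apply/existsP; exists (s1 (Ordinal ht)).
  rewrite /= !leqnn eqxx /=; lia.
move=> t; rewrite sz => ht1 x; have ht : t < n by lia.
rewrite (Hn t ht) memA => /existsP[a /existsP[b /and3P[Ha Hb Hx]]].
move: Ha => /= Ha.
case: (ltnP a t) => Hat.
  left; have ht0 : t.-1 < n by lia.
  split; first by lia.
  rewrite (Hn _ ht0) inE !memA; apply/andP; split;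
    apply/existsP; exists a; apply/existsP; exists b; rewrite Hb Hx /= andbT; lia.
right; rewrite (Hn _ ht1) inE !memA; apply/andP; split;
  apply/existsP; exists a; apply/existsP; exists b; rewrite Hb Hx /= andbT; lia.
Qed.
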